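(* Under the setting below with the randomized sampling requirement, assume additionally that $G$ is convex and each $f_i$ is $\mu_{f_i}$-strongly convex ($\mu_{f_i}>0$). Let $\bm x^\star$ be the unique minimizer of $\Phi$, $\mu_F:=\frac1N\operatorname{blockdiag}(\mu_{f_1}I_{n_1},\dots,\mu_{f_N}I_{n_N})$, $\xi_i:=\frac{N-\gamma_iL_{f_i}}{N}$, and $c:=\min_{i\in[N]}\{\xi_ip_i/\gamma_i\}\,\big/\,\max_{i\in[N]}\{(N-\gamma_i\mu_{f_i})/(\gamma_i^2\mu_{f_i})\}$. Then for all $k$: $\mathbb E_k[\Phi^{\mathrm{FB}}_\Gamma(\bm x^{k+1})-\min\Phi]\le(1-c)(\Phi^{\mathrm{FB}}_\Gamma(\bm x^k)-\min\Phi)$, $\mathbb E[\Phi(\bm z^k)-\min\Phi]\le(\Phi(\bm x^0)-\min\Phi)(1-c)^k$, and $\frac12\mathbb E[\|\bm z^k-\bm x^\star\|^2_{\mu_F}]\le(\Phi(\bm x^0)-\min\Phi)(1-c)^k$. Moreover, assuming $\kappa_i:=L_{f_i}/\mu_{f_i}>1$ for all $i$, if the stepsizes and minimal sampling probabilities are chosen as $\gamma_i=\frac{N}{\mu_{f_i}}(1-\sqrt{1-1/\kappa_i})$ and $p_i=\frac{(\sqrt{\kappa_i}+\sqrt{\kappa_i-1})^2}{\sum_{j=1}^N(\sqrt{\kappa_j}+\sqrt{\kappa_j-1})^2}$, then the three inequalities hold with $c=1\big/\sum_{i=1}^N(\sqrt{\kappa_i}+\sqrt{\kappa_i-1})^2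$.
   Context: Setting: $N\ge1$, $n=\sum_{i=1}^N n_i$, $\bm x=(x_1,\dots,x_N)$ with $x_i\in\mathbb R^{n_i}$; $\Phi=F+G$ with $F(\bm x)=\frac1N\sum_i f_i(x_i)$, each $f_i:\mathbb R^{n_i}\to\mathbb R$ differentiable with $L_{f_i}$-Lipschitz gradient, $G:\mathbb R^n\to\mathbb R\cup\{+\infty\}$ proper lsc, $\arg\min\Phi\ne\emptyset$. $\gamma_i\in(0,N/L_{f_i})$, $\Gamma=\operatorname{blockdiag}(\gamma_1I_{n_1},\dots,\gamma_NI_{n_N})$, $\|x\|_V^2=\langle x,Vx\rangle$, $\operatorname{prox}_G^{V}(u)=\arg\min_w\{G(w)+\frac12\|w-u\|_V^2\}$, $\mathbf T(\bm x)=\operatorname{prox}_G^{\Gamma^{-1}}(\bm x-\Gamma\nabla F(\bm x))$. Forward-backward envelope: $\Phi^{\mathrm{FB}}_\Gamma(\bm x):=\inf_{\bm w}\{F(\bm x)+\langle\nabla F(\bm x),\bm w-\bm x\rangle+G(\bm w)+\frac12\|\bm w-\bm x\|^2_{\Gamma^{-1}}\}$. Algorithm BC: given $\bm x^0\in\mathbb R^n$, for $k=0,1,\dots$: pick $\bm z^k\in\mathbf T(\bm x^k)$; select $I^{k+1}\subseteq[N]$; set $x_i^{k+1}=z_i^k$ for $i\in I^{k+1}$ and $x_i^{k+1}=x_i^k$ otherwise. Randomized sampling requirement: there exist $p_1,\dots,p_N>0$ such that at every iteration, conditionally on the past, $\mathbb P(i\in I^{k+1})\ge p_i$ for every $i$.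 $\mathbb E_k$ denotes expectation conditional on the history up to iteration $k$; $\mathbb E$ is unconditional expectation. *)

(* Defs.v *)
From HB Require Import structures.
From Stdlib Require Import Reals ClassicalEpsilon.
From mathcomp Require Import all_boot.
Set Implicit Arguments. Unset Strict Implicit. Unset Printing Implicit Defensive.
Local Open Scope R_scope.

Lemma Rplus_assoc' : associative Rplus.
Proof. by move=> a b c; rewrite Rplus_assoc. Qed.
HB.instance Definition _ := Monoid.isComLaw.Build R R0 Rplus Rplus_assoc' Rplus_comm Rplus_0_l.

Notation "\sumR_ ( i : T ) F" := (\big[Rplus/R0]_(i : T) F)
  (at level 41, F at level 41, i at level 50) : R_scope.
Notation "\sumR_ ( i < n ) F" := (\big[Rplus/R0]_(i < n) F)
  (at level 41, F at level 41, i, n at level 50) : R_scope.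

(** min / max of a real family indexed by 'I_N (meaningful for N >= 1) *)
Definition minI (N : nat) (a : 'I_N -> R) : R :=
  match map a (enum 'I_N) with [::] => 0 | x :: s => foldr Rmin x s end.
Definition maxI (N : nat) (a : 'I_N -> R) : R :=
  match map a (enum 'I_N) with [::] => 0 | x :: s => foldr Rmax x s end.

Definition Blk (d : nat) := 'I_d -> R.
Definition ipB d (u v : Blk d) : R := \sumR_(j < d) (u j * v j).
Definition normB d (u : Blk d) : R := sqrt (ipB u u).
Definition subB d (u v : Blk d) : Blk d := fun j => u j - v j.
Definition combB d (t : R) (u v : Blk d) : Blk d := fun j => t * u j + (1 - t) * v j.

Definition has_gradient d (f : Blk d -> R) (g : Blk d -> Blk d) : Prop :=
  forall x eps, 0 < eps -> exists delta, 0 < delta /\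
    forall y, normB (subB y x) < delta ->
      Rabs (f y - f x - ipB (g x) (subB y x)) <= eps * normB (subB y x).

Definition lipschitz_grad d (g : Blk d -> Blk d) (L : R) : Prop :=
  forall x y, normB (subB (g x) (g y)) <= L * normB (subB x y).

Definition strongly_convex d (f : Blk d -> R) (mu : R) : Prop :=
  forall x y t, 0 <= t <= 1 ->
    f (combB t x y) <= t * f x + (1 - t) * f y - mu / 2 * t * (1 - t) * (normB (subB x y))^2.

Definition X (N : nat) (nN : 'I_N -> nat) := forall i : 'I_N, Blk (nN i).

Section Prod.
Variables (N : nat) (nN : 'I_N -> nat).
Definition ipX (u v : X nN) : R := \sumR_(i : 'I_N) ipB (u i) (v i).
(* ||u||_V^2 for V = blockdiag(w_1 I_{n_1},...,w_N I_{n_N}) *)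
Definition wnorm2 (w : 'I_N -> R) (u : X nN) : R :=
  \sumR_(i : 'I_N) (w i * ipB (u i) (u i)).
Definition distX (u v : X nN) : R := sqrt (ipX (fun i => subB (u i) (v i)) (fun i => subB (u i) (v i))).
Definition subX (u v : X nN) : X nN := fun i => subB (u i) (v i).
Definition combX (t : R) (u v : X nN) : X nN := fun i => combB t (u i) (v i).
Definition affX (u : X nN) (w : 'I_N -> R) (v : X nN) : X nN :=
  fun i j => u i j + w i * v i j.   (* u + W v with W block-diagonal *)
End Prod.

(** Extended-real-valued G : R^n -> R U {+oo}, given by its (effective)
    domain dom and its finite values g on dom (G = +oo outside dom). *)
Section ExtG.
Variables (N : nat) (nN : 'I_N -> nat) (dom : X nN -> Prop) (g : X nN -> R).
(* "G y > t" *)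
Definition G_above (y : X nN) (t : R) : Prop := ~ dom y \/ t < g y.
Definition G_proper : Prop := exists x, dom x.
Definition G_lsc : Prop :=
  forall x t, G_above x t -> exists delta, 0 < delta /\
    forall y, distX y x < delta -> G_above y t.
Definition G_convex : Prop :=
  forall x y t, dom x -> dom y -> 0 <= t <= 1 ->
    dom (combX t x y) /\ g (combX t x y) <= t * g x + (1 - t) * g y.
Definition in_prox (v : 'I_N -> R) (u w : X nN) : Prop :=
  dom w /\ forall w', dom w' ->
    g w + / 2 * wnorm2 v (subX w u) <= g w' + / 2 * wnorm2 v (subX w' u).
End ExtG.

Definition is_glb (S : R -> Prop) (v : R) : Prop :=
  (forall y, S y -> v <= y) /\ (forall u, (forall y, S y -> u <= y) -> u <= v).
Definition Rinf (S : R -> Prop) : R := epsilon (inhabits 0) (is_glb S).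

Section Problem.
Variables (N : nat) (nN : 'I_N -> nat)
  (f : forall i : 'I_N, Blk (nN i) -> R)
  (gf : forall i : 'I_N, Blk (nN i) -> Blk (nN i))
  (dom : X nN -> Prop) (g : X nN -> R)
  (gamma : 'I_N -> R).

Definition Fx (x : X nN) : R := / INR N * \sumR_(i : 'I_N) (@f i (x i)).
Definition gradF (x : X nN) : X nN := fun i j => / INR N * @gf i (x i) j.
(* Phi = F + G, on dom G *)
Definition PhiR (x : X nN) : R := Fx x + g x.
Definition Gamma_inv : 'I_N -> R := fun i => / gamma i.
Definition in_T (x z : X nN) : Prop :=
  in_prox dom g Gamma_inv (affX x (fun i => - gamma i) (gradF x)) z.
Definition FBE (x : X nN) : R :=
  Rinf (fun v => exists w, dom w /\
    v = Fx x + ipX (gradF x) (subX w x) + g w + / 2 * wnorm2 Gamma_inv (subX w x)).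

(** ---- algorithm BC, randomized: histories of sampled sets ----
   A history h = [:: I^k; ...; I^1] (most recent first); D h is the
   conditional distribution of I^{k+1} given the history h.  *)
Definition history := seq {set 'I_N}.
Definition update (x z : X nN) (A : {set 'I_N}) : X nN :=
  fun i => if i \in A then z i else x i.
Fixpoint traj (x0 : X nN) (z : history -> X nN) (h : history) : X nN :=
  match h with
  | [::] => x0
  | A :: h' => update (traj x0 z h') (z h') A
  end.
(* Exp k G h = E[ G(history after k further steps) | history h ] *)
Fixpoint Exp (D : history -> {set 'I_N} -> R) (k : nat) (G : history -> R)
  (h : history) : R :=
  match k with
  | O => G h
  | S k' => \sumR_(A : {set 'I_N}) (D h A * Exp D k' G (A :: h))
  end.
Definition sampling_ok (D : history -> {set 'I_N} -> R) (p : 'I_N -> R) : Prop :=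
  forall h, (forall A, 0 <= D h A) /\ \sumR_(A : {set 'I_N}) D h A = 1 /\
    forall i, p i <= \sumR_(A : {set 'I_N}) (if i \in A then D h A else 0).

Definition BC_rates (D : history -> {set 'I_N} -> R) (x0 : X nN)
  (z : history -> X nN) (xstar : X nN) (mu : 'I_N -> R) (c : R) : Prop :=
  (forall h : history,
     \sumR_(A : {set 'I_N}) (D h A * (FBE (traj x0 z (A :: h)) - PhiR xstar))
       <= (1 - c) * (FBE (traj x0 z h) - PhiR xstar)) /\
  (dom x0 -> forall k,
     Exp D k (fun h => PhiR (z h) - PhiR xstar) [::]
       <= (PhiR x0 - PhiR xstar) * (1 - c) ^ k) /\
  (dom x0 -> forall k,
     / 2 * Exp D k (fun h => wnorm2 (fun i => mu i / INR N) (subX (z h) xstar)) [::]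
       <= (PhiR x0 - PhiR xstar) * (1 - c) ^ k).
End Problem.

(* Main.v *)
Require Import Defs.
From Stdlib Require Import Reals Lra Psatz ClassicalEpsilon FunctionalExtensionality.
From mathcomp Require Import all_boot.
Local Open Scope R_scope.

Module MA.
Set Implicit Arguments. Unset Strict Implicit.

Section Sums.
Variable I : finType.
Implicit Types F G : I -> R.

Lemma sumR_le F G : (forall i, F i <= G i) -> \sumR_(i : I) F i <= \sumR_(i : I) G i.
Proof. move=> H; apply: (big_ind2 (fun a b => a <= b)) => //; [lra| move=> *; lra]. Qed.

Lemma sumR_scal c F : \sumR_(i : I) (c * F i) = c * \sumR_(i : I) F i.
Proof. apply: (big_ind2 (fun a b => a = c * b)) => //; [ring| move=> a b x y -> ->; ring]. Qed.

Lemma sumR_add F G : \sumR_(i : I) (F i + G i) = \sumR_(i : I) F i + \sumR_(i : I) G i.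
Proof. exact: big_split. Qed.

Lemma sumR_ext F G : (forall i, F i = G i) -> \sumR_(i : I) F i = \sumR_(i : I) G i.
Proof. move=> H; apply: eq_bigr => i _; exact: H. Qed.

Lemma sumR_ge0 F : (forall i, 0 <= F i) -> 0 <= \sumR_(i : I) F i.
Proof. move=> H; apply: (big_ind (fun a => 0 <= a)) => //; [lra| move=> *; lra]. Qed.

Lemma sumR_0 F : (forall i, F i = 0) -> \sumR_(i : I) F i = 0.
Proof. move=> H; apply: big1 => i _; exact: H. Qed.

Lemma sumR_term F i0 : (forall i, 0 <= F i) -> F i0 <= \sumR_(i : I) F i.
Proof.
move=> H; rewrite (bigD1 i0) //=.
have : 0 <= \big[Rplus/R0]_(i | i != i0) F i.
  apply: (big_ind (fun a => 0 <= a)) => //; [lra| move=> *; lra].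
lra.
Qed.
End Sums.



End MA.
Import MA.

Module MB.
Set Implicit Arguments. Unset Strict Implicit.

Lemma small_frac x : 0 <= x -> x / (2 * (x + 1)) < 1.
Proof.
move=> hx; apply: (Rmult_lt_reg_r (2 * (x + 1))); first lra.
rewrite /Rdiv Rmult_assoc Rinv_l; lra.
Qed.

Section Vec.
Variable d : nat.
Implicit Types u v w : Blk d.

Lemma ipB_ge0 u : 0 <= ipB u u.
Proof. apply: sumR_ge0 => j; nra. Qed.

Lemma normB_ge0 u : 0 <= normB u.
Proof. exact: sqrt_pos. Qed.

Lemma normB_sq u : normB u * normB u = ipB u u.
Proof. apply: sqrt_sqrt; exact: ipB_ge0. Qed.

Lemma ipB_scal_l c u v : ipB (fun j => c * u j) v = c * ipB u v.
Proof. rewrite /ipB -sumR_scal; apply: sumR_ext => j; ring. Qed.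

Lemma ipB_sub_l u v w : ipB (subB u v) w = ipB u w - ipB v w.
Proof.
rewrite /ipB /subB -[_ - _]Rplus_0_r.
have -> : \sumR_(j < d) (u j * w j) - \sumR_(j < d) (v j * w j) + 0 =
  \sumR_(j < d) (u j * w j) + (-1) * \sumR_(j < d) (v j * w j) by ring.
rewrite -sumR_scal -sumR_add; apply: sumR_ext => j; ring.
Qed.

Lemma ipB_self0 u v : ipB u (subB v v) = 0.
Proof. apply: sumR_0 => j; rewrite /subB; ring. Qed.

Lemma ipB_amgm lam u v : 0 < lam ->
  ipB u v <= lam / 2 * ipB u u + / (2 * lam) * ipB v v.
Proof.
move=> hl; rewrite /ipB -!sumR_scal -sumR_add; apply: sumR_le => j.
have h : 0 <= (lam * u j - v j) ^ 2 by apply: pow2_ge_0.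
have e : lam / 2 * (u j * u j) + / (2 * lam) * (v j * v j) - u j * v j
   = (lam * u j - v j) ^ 2 / (2 * lam) by field; lra.
have : 0 <= (lam * u j - v j) ^ 2 / (2 * lam).
  apply: Rmult_le_pos => //; apply/Rlt_le/Rinv_0_lt_compat; lra.
lra.
Qed.

Lemma cs u v : ipB u v <= normB u * normB v.
Proof.
have hu := normB_sq u; have hv := normB_sq v.
have hu0 := normB_ge0 u; have hv0 := normB_ge0 v.
set a := normB u in hu hu0 *; set b := normB v in hv hv0 *.
case: (Req_dec a 0) => ha.
  apply: Rnot_lt_le => hlt.
  set e := ipB u v in hlt.
  have he : 0 < e by rewrite ha in hlt; lra.
  have hp : 0 < (ipB v v + 1) / e by apply: Rdiv_lt_0_compat; [have := ipB_ge0 v|]; lra.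
  have := ipB_amgm u v hp.
  rewrite -hu ha Rmult_0_r Rmult_0_r Rplus_0_l -/e.
  have -> : / (2 * ((ipB v v + 1) / e)) * ipB v v = e * (ipB v v / (2 * (ipB v v + 1))).
    field; have := ipB_ge0 v; lra.
  have : ipB v v / (2 * (ipB v v + 1)) < 1.
    apply: small_frac; exact: ipB_ge0.
  nra.
case: (Req_dec b 0) => hb.
  apply: Rnot_lt_le => hlt.
  set e := ipB u v in hlt.
  have he : 0 < e by rewrite hb in hlt; lra.
  have hp : 0 < e / (ipB u u + 1) by apply: Rdiv_lt_0_compat; [|have := ipB_ge0 u]; lra.
  have := ipB_amgm u v hp.
  rewrite -hv hb Rmult_0_r Rmult_0_r Rplus_0_r -/e.
  have -> : e / (ipB u u + 1) / 2 * ipB u u = e * (ipB u u / (2 * (ipB u u + 1))).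
    field; have := ipB_ge0 u; lra.
  have : ipB u u / (2 * (ipB u u + 1)) < 1.
    apply: small_frac; exact: ipB_ge0.
  nra.
have ha' : 0 < a by lra.
have hb' : 0 < b by lra.
have := ipB_amgm u v (Rdiv_lt_0_compat _ _ hb' ha').
rewrite -hu -hv.
have -> : b / a / 2 * (a * a) + / (2 * (b / a)) * (b * b) = a * b by field; lra.
done.
Qed.
End Vec.

End MB.
Import MB.

Module MC.
Set Implicit Arguments. Unset Strict Implicit.

Lemma le_eps A B C : (forall e, 0 < e <= 1 -> A <= B + e * C) -> A <= B.
Proof.
move=> H; apply: Rnot_lt_le => hlt.
set e := Rmin 1 ((A - B) / (2 * (Rabs C + 1))).
have hC := Rabs_pos C.
have hq : 0 < (A - B) / (2 * (Rabs C + 1)) by apply: Rdiv_lt_0_compat; lra.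
have he : 0 < e by apply: Rmin_glb_lt; lra.
have he1 : e <= 1 by apply: Rmin_l.
have he2 : e <= (A - B) / (2 * (Rabs C + 1)) by apply: Rmin_r.
have := H e (conj he he1).
have h1 : e * C <= e * Rabs C by apply: Rmult_le_compat_l; [lra| apply: Rle_abs].
have h2 : e * (2 * (Rabs C + 1)) <= A - B.
  have := Rmult_le_compat_r (2 * (Rabs C + 1)) _ _ ltac:(lra) he2.
  rewrite /Rdiv Rmult_assoc Rinv_l; lra.
nra.
Qed.

Section Path.
Variable d : nat.
Definition pathB (a dd : Blk d) (t : R) : Blk d := fun j => a j + t * dd j.

Lemma ipB_path (a dd g : Blk d) t1 t0 :
  ipB g (subB (pathB a dd t1) (pathB a dd t0)) = (t1 - t0) * ipB g dd.
Proof. rewrite /ipB -sumR_scal; apply: sumR_ext => j; rewrite /subB /pathB; ring. Qed.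

Lemma ipB_path0 (a dd g : Blk d) t :
  ipB g (subB (pathB a dd t) a) = t * ipB g dd.
Proof. rewrite /ipB -sumR_scal; apply: sumR_ext => j; rewrite /subB /pathB; ring. Qed.

Lemma normB_scal (u v : Blk d) c : (forall j, u j = c * v j) -> normB u = Rabs c * normB v.
Proof.
move=> H; rewrite /normB.
have -> : ipB u u = Rsqr c * ipB v v.
  rewrite /ipB -sumR_scal; apply: sumR_ext => j; rewrite H /Rsqr; ring.
rewrite sqrt_mult; [| apply: Rle_0_sqr | apply: ipB_ge0].
by rewrite sqrt_Rsqr_abs.
Qed.

Lemma pathB0 (a dd : Blk d) : pathB a dd 0 = a.
Proof. apply: functional_extensionality => j; rewrite /pathB; ring. Qed.

Lemma deriv_path (f : Blk d -> R) gf a dd t0 : has_gradient f gf ->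
  derivable_pt_lim (fun t => f (pathB a dd t)) t0 (ipB (gf (pathB a dd t0)) dd).
Proof.
move=> hg eps heps.
set n := normB dd.
have hn : 0 <= n := normB_ge0 dd.
have he' : 0 < eps / (2 * (n + 1)) by apply: Rdiv_lt_0_compat; lra.
have [del [hdel Hd]] := hg (pathB a dd t0) _ he'.
have hdp : 0 < del / (n + 1) by apply: Rdiv_lt_0_compat; lra.
exists (mkposreal _ hdp) => h hh0 /= hh.
have hnorm : normB (subB (pathB a dd (t0 + h)) (pathB a dd t0)) = Rabs h * n.
  rewrite /n; apply: normB_scal => j; rewrite /subB /pathB; ring.
have hlt : normB (subB (pathB a dd (t0 + h)) (pathB a dd t0)) < del.
  rewrite hnorm.
  have hab := Rabs_pos h.
  have : Rabs h * (n + 1) < del.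
    have := Rmult_lt_compat_r (n + 1) _ _ ltac:(lra) hh.
    rewrite /Rdiv Rmult_assoc Rinv_l; lra.
  nra.
have := Hd _ hlt.
rewrite hnorm ipB_path.
have -> : t0 + h - t0 = h by ring.
set l := ipB (gf (pathB a dd t0)) dd.
set D := f (pathB a dd (t0 + h)) - f (pathB a dd t0).
move=> hb.
have -> : D / h - l = (D - h * l) / h by field.
rewrite /Rdiv Rabs_mult Rabs_inv.
have hah : 0 < Rabs h by apply: Rabs_pos_lt.
apply: (Rmult_lt_reg_r (Rabs h)) => //.
rewrite /Rdiv Rmult_assoc Rinv_l; last lra.
rewrite Rmult_1_r.
have : eps / (2 * (n + 1)) * n < eps.
  have : eps / (2 * (n + 1)) * n = eps * (n / (2 * (n + 1))) by field; lra.
  move=> ->; have := small_frac hn; nra.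
have : D - h * l = f (pathB a dd (t0 + h)) - f (pathB a dd t0) - h * l by [].
nra.
Qed.

Lemma deriv_poly A B t : derivable_pt_lim (fun t => A * t + B * (t * t)) t (A + B * (2 * t)).
Proof.
move=> eps heps.
have hp : 0 < eps / (Rabs B + 1) by apply: Rdiv_lt_0_compat; have := Rabs_pos B; lra.
exists (mkposreal _ hp) => h hh0 /= hh.
have -> : (A * (t + h) + B * ((t + h) * (t + h)) - (A * t + B * (t * t))) / h - (A + B * (2 * t))
   = B * h by field.
rewrite Rabs_mult.
have hB := Rabs_pos B.
have : Rabs h * (Rabs B + 1) < eps.
  have := Rmult_lt_compat_r (Rabs B + 1) _ _ ltac:(lra) hh.
  rewrite /Rdiv Rmult_assoc Rinv_l; lra.
have := Rabs_pos h; nra.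
Qed.

Lemma descent (f : Blk d -> R) gf L a y : has_gradient f gf -> lipschitz_grad gf L ->
  f y <= f a + ipB (gf a) (subB y a) + L / 2 * ipB (subB y a) (subB y a).
Proof.
move=> hg hL.
set dd := subB y a; set G := ipB (gf a) dd; set K := ipB dd dd.
pose psi t := f (pathB a dd t) - (G * t + (L / 2 * K) * (t * t)).
have hd : forall t, derivable_pt_lim psi t
    (ipB (gf (pathB a dd t)) dd - (G + (L / 2 * K) * (2 * t))).
  move=> t; apply: (derivable_pt_lim_minus (fun t => f (pathB a dd t))
     (fun t => G * t + (L / 2 * K) * (t * t))).
    exact: deriv_path.
  exact: deriv_poly.
pose pr : derivable psi := fun t => exist _ _ (hd t).
have [c [hc [hc0 hc1]]] := MVT_cor1 psi 0 1 pr Rlt_0_1.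
have ey : pathB a dd 1 = y.
  apply: functional_extensionality => j; rewrite /pathB /dd /subB; ring.
move: hc; rewrite /psi ey pathB0 /derive_pt /=.
have hcs : ipB (gf (pathB a dd c)) dd - G <= L * c * K.
  rewrite /G -ipB_sub_l.
  apply: Rle_trans (cs _ _) _.
  have hn := normB_ge0 dd.
  have := hL (pathB a dd c) a.
  have -> : normB (subB (pathB a dd c) a) = Rabs c * normB dd.
    apply: normB_scal => j; rewrite /subB /pathB; ring.
  rewrite Rabs_pos_eq; last lra.
  move=> h1.
  have := Rmult_le_compat_r _ _ _ hn h1.
  rewrite /K -normB_sq. nra.
nra.
Qed.

Lemma sc_first (f : Blk d -> R) gf mu a y : has_gradient f gf -> strongly_convex f mu -> 0 < mu ->
  f a + ipB (gf a) (subB y a) + mu / 2 * ipB (subB y a) (subB y a) <= f y.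
Proof.
move=> hg hs hmu.
set dd := subB y a; set G := ipB (gf a) dd; set K := ipB dd dd.
set n := normB dd.
have hn : 0 <= n := normB_ge0 dd.
have hK : 0 <= K := ipB_ge0 dd.
apply: (le_eps (C := n + mu / 2 * K)) => e [he0 he1].
have [del [hdel Hd]] := hg a e he0.
set t := Rmin e (del / (2 * (n + 1))).
have hq : 0 < del / (2 * (n + 1)) by apply: Rdiv_lt_0_compat; lra.
have ht0 : 0 < t by apply: Rmin_glb_lt; lra.
have hte : t <= e by apply: Rmin_l.
have htd : t <= del / (2 * (n + 1)) by apply: Rmin_r.
have hnt : normB (subB (pathB a dd t) a) = t * n.
  rewrite (@normB_scal _ dd t); first by rewrite Rabs_pos_eq //; lra.
  move=> j; rewrite /subB /pathB; ring.
have hlt : normB (subB (pathB a dd t) a) < del.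
  rewrite hnt.
  have : t * (2 * (n + 1)) <= del.
    have := Rmult_le_compat_r (2 * (n + 1)) _ _ ltac:(lra) htd.
    rewrite /Rdiv Rmult_assoc Rinv_l; lra.
  nra.
have := Hd _ hlt.
rewrite hnt ipB_path0 -/G => hb.
have hsc := hs y a t ltac:(lra).
have ec : combB t y a = pathB a dd t.
  apply: functional_extensionality => j; rewrite /combB /pathB /dd /subB; ring.
rewrite ec in hsc.
have e2 : normB (subB y a) ^ 2 = K by rewrite /= Rmult_1_r normB_sq.
rewrite e2 in hsc.
have hab : - (f (pathB a dd t) - f a - t * G) <= Rabs (f (pathB a dd t) - f a - t * G).
  rewrite -Rabs_Ropp; apply: Rle_abs.
have hl : f a + t * G - e * (t * n) <= f (pathB a dd t) by lra.
have E : t * (f y + e * n + mu / 2 * K * t) - t * (f a + G + mu / 2 * K) =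
   (t * f y + (1 - t) * f a - mu / 2 * t * (1 - t) * K) - (f a + t * G - e * (t * n)) by ring.
have key : t * (f a + G + mu / 2 * K) <= t * (f y + e * n + mu / 2 * K * t) by lra.
have := Rmult_le_reg_l _ _ _ ht0 key.
have : mu / 2 * K * t <= mu / 2 * K * e.
  apply: Rmult_le_compat_l => //; apply: Rmult_le_pos => //; lra.
lra.
Qed.
End Path.

End MC.
Import MC.

Module MD.
Set Implicit Arguments. Unset Strict Implicit.

Section S2.
Variables (N : nat) (nN : 'I_N -> nat).
Definition S2 (F : forall i : 'I_N, 'I_(nN i) -> R) : R :=
  \sumR_(i : 'I_N) \sumR_(j : 'I_(nN i)) F i j.

Lemma S2_add F G : S2 F + S2 G = S2 (fun i j => F i j + G i j).
Proof. rewrite /S2 -sumR_add; apply: sumR_ext => i; by rewrite sumR_add. Qed.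

Lemma S2_scal a F : a * S2 F = S2 (fun i j => a * F i j).
Proof. rewrite /S2 -sumR_scal; apply: sumR_ext => i; by rewrite sumR_scal. Qed.

Lemma S2_ext F G : (forall i j, F i j = G i j) -> S2 F = S2 G.
Proof. move=> H; apply: sumR_ext => i; apply: sumR_ext => j; exact: H. Qed.

Lemma S2_le F G : (forall i j, F i j <= G i j) -> S2 F <= S2 G.
Proof. move=> H; apply: sumR_le => i; apply: sumR_le => j; exact: H. Qed.

Lemma ipX_S2 (u v : X nN) : ipX u v = S2 (fun i j => u i j * v i j).
Proof. by []. Qed.

Lemma wnorm2_S2 (c : 'I_N -> R) (v : X nN) :
  wnorm2 c v = S2 (fun i j => c i * (v i j * v i j)).
Proof. rewrite /wnorm2 /S2; apply: sumR_ext => i; by rewrite -sumR_scal. Qed.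

Lemma wnorm2_ge0 (c : 'I_N -> R) (v : X nN) : (forall i, 0 <= c i) -> 0 <= wnorm2 c v.
Proof. move=> H; apply: sumR_ge0 => i; apply: Rmult_le_pos => //; exact: ipB_ge0. Qed.
End S2.

Section Main.
Variables (N : nat) (nN : 'I_N -> nat)
  (f : forall i : 'I_N, Blk (nN i) -> R)
  (gf : forall i : 'I_N, Blk (nN i) -> Blk (nN i))
  (dom : X nN -> Prop) (g : X nN -> R) (gamma : 'I_N -> R).
Hypothesis hgam : forall i, 0 < gamma i.
Hypothesis hN : (0 < N)%nat.

Lemma INR_N_pos : 0 < INR N.
Proof. apply: lt_0_INR; by apply/ltP. Qed.

Definition qv (x w : X nN) : R := Fx f x + ipX (gradF gf x) (subX w x) + g w
   + / 2 * wnorm2 (Gamma_inv gamma) (subX w x).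

Definition blockq (i : 'I_N) (a w : Blk (nN i)) : R :=
  f a / INR N + ipB (fun j => / INR N * gf a j) (subB w a)
  + / 2 * (/ gamma i * ipB (subB w a) (subB w a)).

Lemma q_block x w : qv x w = \sumR_(i : 'I_N) blockq (x i) (w i) + g w.
Proof.
rewrite /qv /Fx /wnorm2 /Gamma_inv -!sumR_scal.
have -> : forall A B C D : R, A + B + C + D = (A + B + D) + C by move=> *; ring.
rewrite -!sumR_add; congr (_ + _); apply: sumR_ext => i.
rewrite /blockq /Rdiv /gradF /subX; ring.
Qed.

Lemma Phi_block w : PhiR f g w = \sumR_(i : 'I_N) (f (w i) / INR N) + g w.
Proof. rewrite /PhiR /Fx -sumR_scal; congr (_ + _); apply: sumR_ext => i; rewrite /Rdiv; ring. Qed.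

Definition uT (x : X nN) : X nN := affX x (fun i => - gamma i) (gradF gf x).
Definition Pv (x w : X nN) : R := g w + / 2 * wnorm2 (Gamma_inv gamma) (subX w (uT x)).
Definition Cx (x : X nN) : R :=
  @S2 N nN (fun i j => / 2 * gamma i * (gradF gf x (i:=i) j * gradF gf x (i:=i) j)).

Lemma q_P x w : qv x w = Fx f x + Pv x w - Cx x.
Proof.
rewrite /qv /Pv /Cx ipX_S2 !wnorm2_S2 !S2_scal.
have -> : forall A B C D E F : R, A + B + C + D = A + (C + E) - F <->
            B + D + F = E by move=> *; split; lra.
rewrite !S2_add; apply: S2_ext => i j.
rewrite /subX /subB /uT /affX /Gamma_inv.
have := hgam i; move=> hg; field; lra.
Qed.

Lemma combX_id t (w z u : X nN) :
  wnorm2 (Gamma_inv gamma) (subX (combX t w z) u) =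
  t * wnorm2 (Gamma_inv gamma) (subX w u) + (1 - t) * wnorm2 (Gamma_inv gamma) (subX z u)
  - t * (1 - t) * wnorm2 (Gamma_inv gamma) (subX w z).
Proof.
rewrite !wnorm2_S2 !S2_scal.
have -> : forall A B C : R, A + B - C = A + B + (-1) * C by move=> *; ring.
rewrite S2_scal !S2_add; apply: S2_ext => i j.
rewrite /subX /subB /combX /combB; ring.
Qed.

Lemma q_strong x z w : G_convex dom g -> in_T gf dom g gamma x z -> dom w ->
  qv x z + / 2 * wnorm2 (Gamma_inv gamma) (subX w z) <= qv x w.
Proof.
move=> hc [hz hmin] hw.
rewrite !q_P.
suff : Pv x z + / 2 * wnorm2 (Gamma_inv gamma) (subX w z) <= Pv x w by lra.
set K := wnorm2 (Gamma_inv gamma) (subX w z).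
apply: (le_eps (C := / 2 * K)) => t [ht0 ht1].
have [hdt hgt] := hc w z t hw hz ltac:(lra).
have := hmin _ hdt.
rewrite combX_id -/K.
rewrite -/(Pv x z).
rewrite /Pv.
set Pz := g z + _.
move=> h.
have key : t * (g z + / 2 * wnorm2 (Gamma_inv gamma) (subX z (uT x)) + / 2 * K)
  <= t * (g w + / 2 * wnorm2 (Gamma_inv gamma) (subX w (uT x)) + t * (/ 2 * K)).
  rewrite /Pz /uT in h *.
  set Wz := wnorm2 _ (subX z _) in h *.
  set Ww := wnorm2 _ (subX w _) in h *.
  set gc := g (combX _ w z) in h hgt.
  have E : t * (g w + / 2 * Ww + t * (/ 2 * K)) - t * (g z + / 2 * Wz + / 2 * K)
    = (t * g w + (1 - t) * g z - gc) +
      ((gc + / 2 * (t * Ww + (1 - t) * Wz - t * (1 - t) * K)) - (g z + / 2 * Wz)) by ring.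
  lra.
have := Rmult_le_reg_l _ _ _ ht0 key; rewrite /Pz /uT; lra.
Qed.
End Main.

End MD.
Import MD.

Module ME.
Set Implicit Arguments. Unset Strict Implicit.

Lemma sumR_sub (I : finType) (F G : I -> R) :
  \sumR_(i : I) (F i - G i) = \sumR_(i : I) F i - \sumR_(i : I) G i.
Proof.
have -> : \sumR_(i : I) F i - \sumR_(i : I) G i = \sumR_(i : I) F i + (-1) * \sumR_(i : I) G i by ring.
rewrite -sumR_scal -sumR_add; apply: sumR_ext => i; ring.
Qed.

Lemma sumR_subo n (F G : 'I_n -> R) :
  \sumR_(i < n) (F i - G i) = \sumR_(i < n) F i - \sumR_(i < n) G i.
Proof. exact: sumR_sub. Qed.

Lemma sumR_addo n (F G : 'I_n -> R) :
  \sumR_(i < n) (F i + G i) = \sumR_(i < n) F i + \sumR_(i < n) G i.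
Proof. exact: sumR_add. Qed.

Lemma sumR_scalo n c (F : 'I_n -> R) :
  \sumR_(i < n) (c * F i) = c * \sumR_(i < n) F i.
Proof. exact: sumR_scal. Qed.

Lemma Rinf_min (S : R -> Prop) v : S v -> (forall y, S y -> v <= y) -> Rinf S = v.
Proof.
move=> hv hlb.
have hg : is_glb S v by split => // u hu; exact: hu.
have [h1 h2] := epsilon_spec (inhabits 0) (is_glb S) (ex_intro _ v hg).
rewrite /Rinf; apply: Rle_antisym.
- exact: h1.
- apply: h2; exact: hlb.
Qed.

Lemma coord_ineq gam mu n u dd : 0 < gam -> 0 < mu -> 0 < n ->
  (/ (2 * gam) - mu / (2 * n)) * (u * u) - / 2 * (/ gam * ((u - dd) * (u - dd)))
  <= (n - gam * mu) / (gam ^ 2 * mu) / 2 * (dd * dd).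
Proof.
move=> h1 h2 h3.
have E : (n - gam * mu) / (gam ^ 2 * mu) / 2 * (dd * dd) -
  ((/ (2 * gam) - mu / (2 * n)) * (u * u) - / 2 * (/ gam * ((u - dd) * (u - dd))))
  = (mu / (2 * n) * u - dd / (2 * gam)) ^ 2 * (2 * n / mu) by field; lra.
have : 0 <= (mu / (2 * n) * u - dd / (2 * gam)) ^ 2 * (2 * n / mu).
  apply: Rmult_le_pos; first exact: pow2_ge_0.
  apply: Rlt_le; apply: Rdiv_lt_0_compat; lra.
lra.
Qed.

Section Main2.
Variables (N : nat) (nN : 'I_N -> nat)
  (f : forall i : 'I_N, Blk (nN i) -> R)
  (gf : forall i : 'I_N, Blk (nN i) -> Blk (nN i))
  (L mu : 'I_N -> R)
  (dom : X nN -> Prop) (g : X nN -> R) (gamma : 'I_N -> R).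
Hypothesis hN : (0 < N)%nat.
Hypothesis hgrad : forall i, has_gradient (@f i) (@gf i).
Hypothesis hL : forall i, lipschitz_grad (@gf i) (L i).
Hypothesis hGconvex : G_convex dom g.
Hypothesis hmu : forall i, 0 < mu i.
Hypothesis hsc : forall i, strongly_convex (@f i) (mu i).
Hypothesis hgam : forall i, 0 < gamma i.

Local Notation qv := (MD.qv f gf g gamma).
Local Notation blockq := (MD.blockq f gf gamma).
Let hNp := INR_N_pos hN.

Lemma FBE_eq x z : in_T gf dom g gamma x z ->
  FBE f gf dom g gamma x = qv x z /\ forall w, dom w -> qv x z <= qv x w.
Proof.
move=> hz.
have hmin : forall w, dom w -> qv x z <= qv x w.
  move=> w hw; have := q_strong f hgam hGconvex hz hw.
  have : 0 <= wnorm2 (Gamma_inv gamma) (subX w z).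
    apply: wnorm2_ge0 => i; apply/Rlt_le/Rinv_0_lt_compat; exact: hgam.
  lra.
split => //.
apply: Rinf_min.
- exists z; split => //; by case: hz.
- by move=> y [w [hw ->]]; exact: hmin.
Qed.

Definition ee (x z : X nN) (i : 'I_N) : R :=
  (/ (2 * gamma i) - L i / (2 * INR N)) * ipB (subB (z i) (x i)) (subB (z i) (x i)).

Lemma blk_descent i (a w : Blk (nN i)) :
  f w / INR N <= blockq a w - (/ (2 * gamma i) - L i / (2 * INR N)) * ipB (subB w a) (subB w a).
Proof.
have := @descent _ (@f i) (@gf i) (L i) a w (@hgrad i) (@hL i).
rewrite /blockq ipB_scal_l.
set G := ipB (gf a) (subB w a); set K := ipB (subB w a) (subB w a).
move=> h.
have hg := hgam i.
have := Rmult_le_compat_r (/ INR N) _ _ (Rlt_le _ _ (Rinv_0_lt_compat _ hNp)) h.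
have -> : (f a + G + L i / 2 * K) * / INR N =
  f a / INR N + / INR N * G + / 2 * (/ gamma i * K) - (/ (2 * gamma i) - L i / (2 * INR N)) * K.
  field; lra.
rewrite /Rdiv; lra.
Qed.

Lemma blk_sc i (a w : Blk (nN i)) :
  blockq a w <= f w / INR N + (/ (2 * gamma i) - mu i / (2 * INR N)) * ipB (subB w a) (subB w a).
Proof.
have := @sc_first _ (@f i) (@gf i) (mu i) a w (@hgrad i) (@hsc i) (hmu i).
rewrite /blockq ipB_scal_l.
set G := ipB (gf a) (subB w a); set K := ipB (subB w a) (subB w a).
move=> h.
have hg := hgam i.
have := Rmult_le_compat_r (/ INR N) _ _ (Rlt_le _ _ (Rinv_0_lt_compat _ hNp)) h.
have -> : (f a + G + mu i / 2 * K) * / INR N =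
  f a / INR N + / INR N * G + / 2 * (/ gamma i * K) - (/ (2 * gamma i) - mu i / (2 * INR N)) * K.
  field; lra.
rewrite /Rdiv; lra.
Qed.

Lemma ee_ge0 x z i : gamma i * L i < INR N -> 0 <= ee x z i.
Proof.
move=> h; rewrite /ee; apply: Rmult_le_pos; last exact: ipB_ge0.
have hg := hgam i.
have -> : / (2 * gamma i) - L i / (2 * INR N) = (INR N - gamma i * L i) / (2 * gamma i * INR N)
  by field; lra.
apply: Rlt_le; apply: Rdiv_lt_0_compat; nra.
Qed.

Lemma Phi_le_q x w : (forall i, gamma i * L i < INR N) -> PhiR f g w <= qv x w.
Proof.
move=> hgl.
rewrite Phi_block q_block.
apply: Rplus_le_compat_r; apply: sumR_le => i.
have := blk_descent (x i) (w i); have := ee_ge0 x w (hgl i); rewrite /ee; lra.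
Qed.

Lemma blockq_self i (a : Blk (nN i)) : blockq a a = f a / INR N.
Proof. rewrite /blockq !ipB_self0; ring. Qed.

Lemma decrease x z A :
  qv (update x z A) z <= qv x z - \sumR_(i < N) (if i \in A then ee x z i else 0).
Proof.
rewrite !q_block.
suff : \sumR_(i < N) blockq (@update _ _ x z A i) (z i) <=
   \sumR_(i < N) (blockq (x i) (z i) - (if i \in A then ee x z i else 0)).
  rewrite sumR_subo; lra.
apply: sumR_le => i; rewrite /update.
case: (i \in A).
- rewrite blockq_self; have := blk_descent (x i) (z i); rewrite /ee; lra.
- lra.
Qed.

Definition bb (i : 'I_N) : R := (INR N - gamma i * mu i) / (gamma i ^ 2 * mu i).

Lemma FBE_bound x z xs : in_T gf dom g gamma x z -> dom xs ->
  FBE f gf dom g gamma x - PhiR f g xs <=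
  \sumR_(i < N) (bb i / 2 * ipB (subB (z i) (x i)) (subB (z i) (x i))).
Proof.
move=> hz hxs.
have [-> _] := FBE_eq hz.
have h1 := q_strong f hgam hGconvex hz hxs.
have h2 : qv x xs <= \sumR_(i < N) (f (xs i) / INR N +
   (/ (2 * gamma i) - mu i / (2 * INR N)) * ipB (subB (xs i) (x i)) (subB (xs i) (x i))) + g xs.
  rewrite q_block; apply: Rplus_le_compat_r; apply: sumR_le => i; exact: blk_sc.
rewrite Phi_block.
rewrite sumR_addo in h2.
set W := wnorm2 _ _ in h1.
have hW : W = \sumR_(i < N) (/ gamma i * ipB (subB (xs i) (z i)) (subB (xs i) (z i))) by [].
suff : \sumR_(i < N) ((/ (2 * gamma i) - mu i / (2 * INR N)) * ipB (subB (xs i) (x i)) (subB (xs i) (x i)))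
   - / 2 * W <= \sumR_(i < N) (bb i / 2 * ipB (subB (z i) (x i)) (subB (z i) (x i))).
  lra.
rewrite hW -sumR_scal -sumR_sub; apply: sumR_le => i.
rewrite /ipB -!sumR_scalo -sumR_subo; apply: sumR_le => j.
rewrite /subB /bb.
have := coord_ineq (xs i j - x i j) (z i j - x i j) (hgam i) (hmu i) hNp.
have -> : xs i j - x i j - (z i j - x i j) = xs i j - z i j by ring.
lra.
Qed.
End Main2.

End ME.
Import ME.

Module MF.
Set Implicit Arguments. Unset Strict Implicit.

Section ExpL.
Variables (N : nat) (D : history N -> {set 'I_N} -> R).
Hypothesis hD0 : forall h A, 0 <= D h A.

Lemma Exp_mono k (G1 G2 : history N -> R) h :
  (forall h, G1 h <= G2 h) -> Exp D k G1 h <= Exp D k G2 h.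
Proof.
move=> H; elim: k h => [|k IH] h /=; first exact: H.
apply: sumR_le => A; apply: Rmult_le_compat_l => //; exact: IH.
Qed.

Lemma Exp_scal k c (G : history N -> R) h :
  Exp D k (fun h => c * G h) h = c * Exp D k G h.
Proof.
elim: k h => [|k IH] h //=.
rewrite -sumR_scal; apply: sumR_ext => A; rewrite IH; ring.
Qed.

Lemma Exp_zero k (G : history N -> R) h : (forall h, G h = 0) -> Exp D k G h = 0.
Proof.
move=> H; elim: k h => [|k IH] h /=; first exact: H.
apply: sumR_0 => A; rewrite IH; ring.
Qed.

Lemma Exp_geo k c (V : history N -> R) h : 0 <= 1 - c ->
  (forall h, \sumR_(A : {set 'I_N}) (D h A * V (A :: h)) <= (1 - c) * V h) ->
  Exp D k V h <= (1 - c) ^ k * V h.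
Proof.
move=> hc H; elim: k h => [|k IH] h /=; first lra.
apply: Rle_trans (_ : \sumR_(A : {set 'I_N}) ((1 - c) ^ k * (D h A * V (A :: h))) <= _).
  apply: sumR_le => A.
  set q := (1 - c) ^ k.
  have -> : q * (D h A * V (A :: h)) = D h A * (q * V (A :: h)) by ring.
  exact: Rmult_le_compat_l _ _ _ (hD0 h A) (IH (A :: h)).
rewrite sumR_scal.
have hp : 0 <= (1 - c) ^ k by apply: pow_le.
set q := (1 - c) ^ k in hp *.
have := Rmult_le_compat_l _ _ _ hp (H h).
have -> : (1 - c) * q * V h = q * ((1 - c) * V h) by ring.
done.
Qed.
End ExpL.

Lemma X_all_eq N (nN : 'I_N -> nat) : (forall i, nN i = 0%nat) -> forall u v : X nN, u = v.
Proof.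
move=> H u v; apply: functional_extensionality_dep => i.
apply: functional_extensionality => j; exfalso.
by move: (ltn_ord j); move: (nat_of_ord j) => m; rewrite H ltn0.
Qed.

Lemma ipB_empty d (u v : Blk d) : d = 0%nat -> ipB u v = 0.
Proof. move=> H; apply: sumR_0 => j; exfalso; by move: (ltn_ord j); move: (nat_of_ord j) => m; rewrite H ltn0. Qed.

Section Main3.
Variables (N : nat) (nN : 'I_N -> nat)
  (f : forall i : 'I_N, Blk (nN i) -> R)
  (gf : forall i : 'I_N, Blk (nN i) -> Blk (nN i))
  (L mu : 'I_N -> R)
  (dom : X nN -> Prop) (g : X nN -> R) (gamma : 'I_N -> R).
Hypothesis hN : (0 < N)%nat.
Hypothesis hgrad : forall i, has_gradient (@f i) (@gf i).
Hypothesis hL : forall i, lipschitz_grad (@gf i) (L i).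
Hypothesis hGconvex : G_convex dom g.
Hypothesis hmu : forall i, 0 < mu i.
Hypothesis hsc : forall i, strongly_convex (@f i) (mu i).
Hypothesis hgam : forall i, 0 < gamma i.

Local Notation qv := (MD.qv f gf g gamma).
Let hNp := INR_N_pos hN.

Lemma qv_self x : qv x x = PhiR f g x.
Proof.
rewrite /MD.qv /PhiR.
have -> : ipX (gradF gf x) (subX x x) = 0 by apply: sumR_0 => i; exact: ipB_self0.
have -> : wnorm2 (Gamma_inv gamma) (subX x x) = 0.
  by apply: sumR_0 => i; rewrite ipB_self0; ring.
ring.
Qed.

Lemma sc_star xs y : dom xs -> (forall x, dom x -> PhiR f g xs <= PhiR f g x) -> dom y ->
  / 2 * wnorm2 (fun i => mu i / INR N) (subX y xs) <= PhiR f g y - PhiR f g xs.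
Proof.
move=> hxs hmin hy.
set W := wnorm2 _ _.
apply: (le_eps (C := / 2 * W)) => t [ht0 ht1].
have [hdt hgt] := @hGconvex y xs t hy hxs ltac:(lra).
have h1 := hmin _ hdt.
have h2 : PhiR f g (combX t y xs) <= t * PhiR f g y + (1 - t) * PhiR f g xs - t * (1 - t) / 2 * W.
  rewrite !Phi_block.
  have hs : \sumR_(i < N) (f (@combX _ _ t y xs i) / INR N) <=
    \sumR_(i < N) ((t * f (y i) + (1 - t) * f (xs i) - mu i / 2 * t * (1 - t) *
        ipB (subB (y i) (xs i)) (subB (y i) (xs i))) / INR N).
    apply: sumR_le => i.
    have := @hsc i (y i) (xs i) t ltac:(lra).
    rewrite /= Rmult_1_r normB_sq => h.
    apply: Rmult_le_compat_r; last exact: h.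
    apply/Rlt_le/Rinv_0_lt_compat; exact: hNp.
  have he : \sumR_(i < N) ((t * f (y i) + (1 - t) * f (xs i) - mu i / 2 * t * (1 - t) *
        ipB (subB (y i) (xs i)) (subB (y i) (xs i))) / INR N) =
     t * (\sumR_(i < N) (f (y i) / INR N)) + (1 - t) * (\sumR_(i < N) (f (xs i) / INR N))
     + (- (t * (1 - t) / 2)) * W.
    rewrite (@sumR_ext _ _ (fun i => t * (f (y i) / INR N) + (1 - t) * (f (xs i) / INR N)
       + (- (t * (1 - t) / 2)) * (mu i / INR N * ipB (subB (y i) (xs i)) (subB (y i) (xs i))))).
      by rewrite !sumR_addo !sumR_scalo.
    move=> i; field; lra.
  lra.
have key : t * (/ 2 * W) <= t * (PhiR f g y - PhiR f g xs + t * (/ 2 * W)).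
  have E : t * (PhiR f g y - PhiR f g xs + t * (/ 2 * W)) - t * (/ 2 * W) =
     (t * PhiR f g y + (1 - t) * PhiR f g xs - t * (1 - t) / 2 * W) - PhiR f g xs by field.
  lra.
exact: Rmult_le_reg_l _ _ _ ht0 key.
Qed.

Lemma mu_le_L i : (0 < nN i)%nat -> mu i <= L i.
Proof.
move=> hn.
pose a : Blk (nN i) := fun _ => 0.
pose y : Blk (nN i) := fun _ => 1.
have h1 := @descent _ (@f i) (@gf i) (L i) a y (@hgrad i) (@hL i).
have h2 := @sc_first _ (@f i) (@gf i) (mu i) a y (@hgrad i) (@hsc i) (hmu i).
set K := ipB (subB y a) (subB y a) in h1 h2.
have hK : 0 < K.
  have := @sumR_term _ (fun j : 'I_(nN i) => subB y a j * subB y a j) (Ordinal hn).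
  rewrite /subB /y /a /= => h.
  have : 1 <= K by apply: Rle_trans (h _); [lra | move=> j; lra].
  lra.
nra.
Qed.
End Main3.

End MF.
Import MF.

Module MG.
Set Implicit Arguments. Unset Strict Implicit.

Section Main4.
Variables (N : nat) (nN : 'I_N -> nat)
  (f : forall i : 'I_N, Blk (nN i) -> R)
  (gf : forall i : 'I_N, Blk (nN i) -> Blk (nN i))
  (L mu : 'I_N -> R)
  (dom : X nN -> Prop) (g : X nN -> R)
  (gamma p : 'I_N -> R)
  (D : history N -> {set 'I_N} -> R)
  (x0 : X nN) (z : history N -> X nN) (xstar : X nN).
Hypothesis hN : (0 < N)%nat.
Hypothesis hgrad : forall i, has_gradient (@f i) (@gf i).
Hypothesis hL : forall i, lipschitz_grad (@gf i) (L i).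
Hypothesis hGconvex : G_convex dom g.
Hypothesis hmu : forall i, 0 < mu i.
Hypothesis hsc : forall i, strongly_convex (@f i) (mu i).
Hypothesis hgamma : forall i, 0 < gamma i /\ gamma i * L i < INR N.
Hypothesis hp : forall i, 0 < p i.
Hypothesis hD : sampling_ok D p.
Hypothesis hz : forall h : history N, in_T gf dom g gamma (traj x0 z h) (z h).
Hypothesis hstar : dom xstar /\ forall x, dom x -> PhiR f g xstar <= PhiR f g x.

Let hgam i : 0 < gamma i := proj1 (hgamma i).
Let hgl i : gamma i * L i < INR N := proj2 (hgamma i).
Let hNp := INR_N_pos hN.
Let hD0 h A : 0 <= D h A := proj1 (hD h) A.

Definition aa (i : 'I_N) : R := (INR N - gamma i * L i) / INR N * p i / gamma i.

Local Notation FBEx := (FBE f gf dom g gamma).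
Local Notation Ps := (PhiR f g xstar).

Lemma claim1 c h : 0 <= c -> (forall i, (0 < nN i)%nat -> c * bb mu gamma i <= aa i) ->
  \sumR_(A : {set 'I_N}) (D h A * (FBEx (traj x0 z (A :: h)) - Ps))
    <= (1 - c) * (FBEx (traj x0 z h) - Ps).
Proof.
move=> hc hcb.
set x := traj x0 z h; set zz := z h.
have [hFx hminx] := FBE_eq f hGconvex hgam (hz h).
have hzz : dom zz by case: (hz h).
set V := FBEx x - Ps.
pose S (A : {set 'I_N}) := \sumR_(i < N) (if i \in A then ee L gamma x zz i else 0).
have hA : forall A, FBEx (traj x0 z (A :: h)) - Ps <= V - S A.
  move=> A; have [e1 m1] := FBE_eq f hGconvex hgam (hz (A :: h)).
  rewrite e1.
  have := m1 zz hzz.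
  have := decrease g hN hgrad hL hgam x zz A.
  rewrite /V hFx /S.
  have -> : traj x0 z (A :: h) = update x zz A by [].
  rewrite /x /zz; lra.
have st1 : \sumR_(A : {set 'I_N}) (D h A * (FBEx (traj x0 z (A :: h)) - Ps))
    <= \sumR_(A : {set 'I_N}) (D h A * (V - S A)).
  apply: sumR_le => A; apply: Rmult_le_compat_l => //; exact: hA.
pose P i := \sumR_(A : {set 'I_N}) (if i \in A then D h A else 0).
have st2 : \sumR_(A : {set 'I_N}) (D h A * (V - S A)) =
   V - \sumR_(i < N) (ee L gamma x zz i * P i).
  have [_ [hs1 _]] := hD h.
  rewrite (@sumR_ext _ _ (fun A => V * D h A + (-1) * (D h A * S A))); last by move=> A; ring.
  rewrite sumR_add !sumR_scal hs1.
  suff -> : \sumR_(A : {set 'I_N}) (D h A * S A) = \sumR_(i < N) (ee L gamma x zz i * P i) by ring.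
  rewrite (@sumR_ext _ _ (fun A => \sumR_(i < N) (D h A * (if i \in A then ee L gamma x zz i else 0)))).
    rewrite exchange_big; apply: sumR_ext => i.
    rewrite /P -sumR_scal; apply: sumR_ext => A; case: (i \in A); ring.
  by move=> A; rewrite /S -sumR_scal.
have st3 : \sumR_(i < N) (p i * ee L gamma x zz i) <= \sumR_(i < N) (ee L gamma x zz i * P i).
  apply: sumR_le => i.
  have he := ee_ge0 hN hgam x zz (hgl i).
  have [_ [_ hpi]] := hD h.
  have := hpi i; rewrite -/(P i) => hP.
  nra.
have st4 : c * (\sumR_(i < N) (bb mu gamma i / 2 * ipB (subB (zz i) (x i)) (subB (zz i) (x i))))
    <= \sumR_(i < N) (p i * ee L gamma x zz i).
  rewrite -sumR_scalo; apply: sumR_le => i.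
  rewrite /ee.
  set K := ipB (subB (zz i) (x i)) (subB (zz i) (x i)).
  case: (posnP (nN i)) => hn.
    have -> : K = 0 by apply: ipB_empty.
    lra.
  have hK : 0 <= K := ipB_ge0 _.
  have := hcb i ltac:(by rewrite hn).
  rewrite /aa.
  have hg := hgam i.
  have -> : (INR N - gamma i * L i) / INR N * p i / gamma i =
    2 * (p i * (/ (2 * gamma i) - L i / (2 * INR N))) by field; lra.
  move=> h1.
  have := Rmult_le_compat_r _ _ _ hK h1.
  lra.
have st5 : V <= \sumR_(i < N) (bb mu gamma i / 2 * ipB (subB (zz i) (x i)) (subB (zz i) (x i))).
  exact: (FBE_bound hN hgrad hGconvex hmu hsc hgam (hz h) (proj1 hstar)).
have := Rmult_le_compat_l _ _ _ hc st5.
lra.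
Qed.

Lemma p_le1 i : p i <= 1.
Proof.
have [_ [hs hpi]] := hD [::].
apply: Rle_trans (hpi i) _; rewrite -hs; apply: sumR_le => A.
case: (i \in A); [lra | exact: hD0].
Qed.

Lemma FBE_le_x0 : dom x0 -> FBEx x0 <= PhiR f g x0.
Proof.
move=> hx0.
have [e m] := FBE_eq f hGconvex hgam (hz [::]).
rewrite /= in e m.
rewrite e -(qv_self f gf g gamma x0); exact: m.
Qed.

Lemma rates_main c : (exists i0, (0 < nN i0)%nat) -> 0 <= c ->
  (forall i, (0 < nN i)%nat -> c * bb mu gamma i <= aa i) ->
  BC_rates f gf dom g gamma D x0 z xstar mu c.
Proof.
move=> [i0 hi0] hc hcb.
have hc1 : 0 <= 1 - c.
  have h1 := hcb i0 hi0.
  have hml := mu_le_L hgrad hL hmu hsc hi0.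
  have hg := hgam i0; have hgl0 := hgl i0; have hm := hmu i0.
  have hpi := p_le1 i0; have hpp := hp i0.
  rewrite /aa /bb in h1.
  set G := gamma i0 in h1 hg hgl0 hml *.
  set M := mu i0 in h1 hm hml *.
  set LL := L i0 in h1 hgl0 hml *.
  set P := p i0 in h1 hpi hpp *.
  have hGM : G * M <= G * LL by apply: Rmult_le_compat_l; lra.
  have hb : 0 < (INR N - G * M) / (G ^ 2 * M).
    apply: Rdiv_lt_0_compat; [nra | apply: Rmult_lt_0_compat => //; exact: pow_lt].
  have ha : (INR N - G * LL) / INR N * P / G <= (INR N - G * M) / (G ^ 2 * M).
    have -> : (INR N - G * LL) / INR N * P / G = ((INR N - G * LL) * P) / (INR N * G) by field; lra.
    have -> : (INR N - G * M) / (G ^ 2 * M) = ((INR N - G * M) * (INR N / (G * M))) / (INR N * G).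
      simpl; field; lra.
    apply: Rmult_le_compat_r.
      apply/Rlt_le/Rinv_0_lt_compat; nra.
    have h2 : 1 <= INR N / (G * M).
      have hGM0 : 0 < G * M by nra.
      apply: (Rmult_le_reg_r (G * M)) => //.
      rewrite /Rdiv Rmult_assoc Rinv_l; lra.
    have h3 : 0 <= INR N - G * M by lra.
    have h4 : (INR N - G * LL) * P <= INR N - G * M by nra.
    nra.
  nra.
set V := fun h => FBEx (traj x0 z h) - Ps.
have hcl : forall h, \sumR_(A : {set 'I_N}) (D h A * V (A :: h)) <= (1 - c) * V h.
  move=> h; exact: claim1.
have hphi : forall h, PhiR f g (z h) - Ps <= V h.
  move=> h; rewrite /V.
  have [e _] := FBE_eq f hGconvex hgam (hz h).
  rewrite e; have := Phi_le_q g hN hgrad hL hgam (traj x0 z h) (z h) hgl; lra.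
have cl2 : dom x0 -> forall k, Exp D k (fun h => PhiR f g (z h) - Ps) [::]
   <= (PhiR f g x0 - Ps) * (1 - c) ^ k.
  move=> hx0 k.
  apply: Rle_trans (Exp_mono hD0 k [::] hphi) _.
  apply: Rle_trans (Exp_geo hD0 k [::] hc1 hcl) _.
  rewrite /V /=.
  have := FBE_le_x0 hx0.
  have := pow_le _ k hc1.
  nra.
split; first by move=> h; exact: claim1.
split; first exact: cl2.
move=> hx0 k.
rewrite -Exp_scal.
apply: Rle_trans (cl2 hx0 k).
apply: Exp_mono => // h.
have hzd : dom (z h) by case: (hz h).
exact: (sc_star hN hGconvex hsc (proj1 hstar) (proj2 hstar) hzd).
Qed.

Lemma rates_deg c : (forall i, nN i = 0%nat) -> BC_rates f gf dom g gamma D x0 z xstar mu c.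
Proof.
move=> h0.
have eq := X_all_eq h0.
have hF : forall h, FBEx (traj x0 z h) = Ps.
  move=> h; have [e _] := FBE_eq f hGconvex hgam (hz h).
  by rewrite e (eq (traj x0 z h) xstar) (eq (z h) xstar) qv_self.
split.
  move=> h; rewrite hF.
  rewrite (@sumR_0 _ (fun A => D h A * (FBEx (traj x0 z (A :: h)) - Ps))).
    lra.
  by move=> A; rewrite (hF (A :: h)); ring.
split.
  move=> _ k; rewrite Exp_zero; first by rewrite (eq x0 xstar); lra.
  by move=> h; rewrite (eq (z h) xstar); ring.
move=> _ k; rewrite Exp_zero; first by rewrite (eq x0 xstar); lra.
move=> h; rewrite (eq (z h) xstar).
apply: sumR_0 => i; rewrite ipB_self0; ring.
Qed.
End Main4.

End MG.
Import MG.

Module MH.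
Set Implicit Arguments. Unset Strict Implicit.

Lemma foldmin_le (T : eqType) (F : T -> R) y r t :
  t \in y :: r -> foldr Rmin (F y) (map F r) <= F t.
Proof.
elim: r t => [|x r IH] t /=.
  by rewrite inE => /eqP ->; lra.
rewrite !inE => /orP [/eqP ->|/orP [/eqP ->| ht]].
- apply: Rle_trans (Rmin_r _ _) _; apply: IH; by rewrite inE eqxx.
- exact: Rmin_l.
- apply: Rle_trans (Rmin_r _ _) _; apply: IH; by rewrite inE ht orbT.
Qed.

Lemma foldmax_le (T : eqType) (F : T -> R) y r t :
  t \in y :: r -> F t <= foldr Rmax (F y) (map F r).
Proof.
elim: r t => [|x r IH] t /=.
  by rewrite inE => /eqP ->; lra.
rewrite !inE => /orP [/eqP ->|/orP [/eqP ->| ht]].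
- apply: Rle_trans (Rmax_r _ _); apply: IH; by rewrite inE eqxx.
- exact: Rmax_l.
- apply: Rle_trans (Rmax_r _ _); apply: IH; by rewrite inE ht orbT.
Qed.

Lemma foldmin_att (T : Type) (F : T -> R) y r : exists t, foldr Rmin (F y) (map F r) = F t.
Proof.
elim: r => [|x r [t IH]] /=; first by exists y.
rewrite IH /Rmin; case: Rle_dec => _; by eexists.
Qed.

Lemma minI_le N (a : 'I_N -> R) i : minI a <= a i.
Proof.
have : i \in enum 'I_N by rewrite mem_enum.
rewrite /minI; case: (enum 'I_N) => [|y r] //= hi; exact: foldmin_le.
Qed.

Lemma maxI_ge N (a : 'I_N -> R) i : a i <= maxI a.
Proof.
have : i \in enum 'I_N by rewrite mem_enum.
rewrite /maxI; case: (enum 'I_N) => [|y r] //= hi; exact: foldmax_le.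
Qed.

Lemma minI_pos N (a : 'I_N -> R) : (0 < N)%nat -> (forall i, 0 < a i) -> 0 < minI a.
Proof.
move=> hN ha.
have : Ordinal hN \in enum 'I_N by rewrite mem_enum.
rewrite /minI; case: (enum 'I_N) => [|y r] //= _.
have [t ->] := foldmin_att a y r; exact: ha.
Qed.

Lemma part2_alg (n mu L gam pp s : R) : 0 < n -> 0 < mu -> 1 < L / mu -> 0 < s ->
  gam = n / mu * (1 - sqrt (1 - / (L / mu))) ->
  pp = (sqrt (L / mu) + sqrt (L / mu - 1)) ^ 2 / s ->
  1 / s * ((n - gam * mu) / (gam ^ 2 * mu)) <= (n - gam * L) / n * pp / gam.
Proof.
move=> hn hm hk hs hg hpp.
set k := L / mu in hk hg hpp.
have hL : L = k * mu by rewrite /k; field; lra.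
have hik : / k < 1 by apply: (Rmult_lt_reg_l k); [lra | rewrite Rinv_r; lra].
have hik0 : 0 < / k by apply: Rinv_0_lt_compat; lra.
set r := sqrt (1 - / k) in hg.
have hr2 : r * r = 1 - / k by apply: sqrt_sqrt; lra.
have hr0 : 0 <= r by apply: sqrt_pos.
have hr1 : r < 1 by nra.
have hsk : sqrt k * sqrt k = k by apply: sqrt_sqrt; lra.
have hsk1 : sqrt (k - 1) = sqrt k * r.
  rewrite /r -sqrt_mult; [|lra|lra]; congr sqrt; field; lra.
rewrite hsk1 in hpp.
have hw : (sqrt k + sqrt k * r) ^ 2 = k * (1 + r) ^ 2.
  have -> : (sqrt k + sqrt k * r) ^ 2 = (sqrt k * sqrt k) * (1 + r) ^ 2 by ring.
  by rewrite hsk.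
rewrite hw in hpp.
have hP : k * (1 - r) * (1 + r) = 1.
  have -> : k * (1 - r) * (1 + r) = k * (1 - r * r) by ring.
  rewrite hr2; field; lra.
have e2 : (1 - (1 - r) * k) * k * (1 + r) ^ 2 * (1 - r) = r.
  have -> : (1 - (1 - r) * k) * k * (1 + r) ^ 2 * (1 - r) =
    (1 + r) * (k * (1 - r) * (1 + r)) - (k * (1 - r) * (1 + r)) * (k * (1 - r) * (1 + r)) by ring.
  rewrite hP; ring.
have e1 : (n - gam * L) / n * pp / gam =
  ((1 - (1 - r) * k) * k * (1 + r) ^ 2 * (1 - r)) * mu / (n * (1 - r) ^ 2 * s).
  rewrite hpp hg hL; field; repeat split; lra.
have e3 : 1 / s * ((n - gam * mu) / (gam ^ 2 * mu)) = r * mu / (n * (1 - r) ^ 2 * s).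
  rewrite hg; field; repeat split; lra.
rewrite e1 e2 e3; lra.
Qed.

End MH.
Import MH.

Unset Implicit Arguments. Set Strict Implicit.

Theorem theorem2p7
  (N : nat) (nN : 'I_N -> nat)
  (f : forall i : 'I_N, Blk (nN i) -> R)
  (gf : forall i : 'I_N, Blk (nN i) -> Blk (nN i))
  (L mu : 'I_N -> R)
  (dom : X nN -> Prop) (g : X nN -> R)
  (gamma p : 'I_N -> R)
  (D : history N -> {set 'I_N} -> R)
  (x0 : X nN) (z : history N -> X nN) (xstar : X nN)
  (hN : (0 < N)%nat)
  (hgrad : forall i, has_gradient (@f i) (@gf i))
  (hL : forall i, lipschitz_grad (@gf i) (L i))
  (hGproper : G_proper dom) (hGlsc : G_lsc dom g) (hGconvex : G_convex dom g)
  (hmu : forall i, 0 < mu i)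
  (hsc : forall i, strongly_convex (@f i) (mu i))
  (hgamma : forall i, 0 < gamma i /\ gamma i * L i < INR N)
  (hp : forall i, 0 < p i)
  (hD : sampling_ok D p)
  (hz : forall h : history N, in_T gf dom g gamma (traj x0 z h) (z h))
  (hstar : dom xstar /\ forall x, dom x -> PhiR f g xstar <= PhiR f g x) :
  let c := minI (fun i => (INR N - gamma i * L i) / INR N * p i / gamma i)
           / maxI (fun i => (INR N - gamma i * mu i) / (gamma i ^ 2 * mu i)) in
  BC_rates f gf dom g gamma D x0 z xstar mu c /\
  (let kappa := fun i => L i / mu i in
   let s := \big[Rplus/R0]_(j : 'I_N) (sqrt (kappa j) + sqrt (kappa j - 1)) ^ 2 in
   (forall i, 1 < kappa i) ->
   (forall i, gamma i = INR N / mu i * (1 - sqrt (1 - / kappa i))) ->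
   (forall i, p i = (sqrt (kappa i) + sqrt (kappa i - 1)) ^ 2 / s) ->
   BC_rates f gf dom g gamma D x0 z xstar mu (1 / s)).
Proof.
move=> c.
have hNp := INR_N_pos hN.
have hbpos : forall i, (0 < nN i)%nat -> 0 < bb mu gamma i.
  move=> i hi; have hml := mu_le_L hgrad hL hmu hsc hi.
  have [hg hgl] := hgamma i; have hm := hmu i.
  rewrite /bb; apply: Rdiv_lt_0_compat; first nra.
  apply: Rmult_lt_0_compat => //; exact: pow_lt.
case: (pickP (fun i => (0 < nN i)%nat)) => [i0 hi0 | hnone]; last first.
  have h0 : forall i, nN i = 0%nat.
    by move=> i; move/negbT: (hnone i); rewrite lt0n negbK => /eqP.
  split; first exact: rates_deg.
  move=> *; exact: rates_deg.
have hex : exists i0, (0 < nN i0)%nat by exists i0.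
split.
  have hapos : 0 < minI (aa L gamma p).
    apply: minI_pos => // i; have [hg hgl] := hgamma i; rewrite /aa.
    apply: Rdiv_lt_0_compat => //; apply: Rmult_lt_0_compat => //.
    apply: Rdiv_lt_0_compat => //; lra.
  have hmx : 0 < maxI (bb mu gamma).
    apply: Rlt_le_trans (hbpos _ hi0) (maxI_ge _ _).
  apply: (rates_main hN hgrad hL hGconvex hmu hsc hgamma hp hD hz hstar hex).
    apply: Rlt_le; apply: Rdiv_lt_0_compat; [exact: hapos | exact: hmx].
  move=> i hi.
  have hb := hbpos i hi.
  have hle : bb mu gamma i <= maxI (bb mu gamma) by apply: maxI_ge.
  have hmi : minI (aa L gamma p) <= aa L gamma p i by apply: minI_le.
  rewrite /c -/(aa L gamma p) -/(bb mu gamma).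
  have : minI (aa L gamma p) / maxI (bb mu gamma) * bb mu gamma i <= minI (aa L gamma p).
    have -> : minI (aa L gamma p) / maxI (bb mu gamma) * bb mu gamma i =
      minI (aa L gamma p) * (bb mu gamma i / maxI (bb mu gamma)) by field; lra.
    have : bb mu gamma i / maxI (bb mu gamma) <= 1.
      apply: (Rmult_le_reg_r (maxI (bb mu gamma))) => //.
      rewrite /Rdiv Rmult_assoc Rinv_l; lra.
    nra.
  lra.
move=> kappa s hk hg' hp'.
have hs : 0 < s.
  apply: Rlt_le_trans (_ : 0 < (sqrt (kappa i0) + sqrt (kappa i0 - 1)) ^ 2) _.
    have : 0 < sqrt (kappa i0) by apply: sqrt_lt_R0; have := hk i0; lra.
    have : 0 <= sqrt (kappa i0 - 1) by apply: sqrt_pos.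
    move=> *; apply: pow_lt; lra.
  apply: (@sumR_term _ (fun j => (sqrt (kappa j) + sqrt (kappa j - 1)) ^ 2)) => j.
  exact: pow2_ge_0.
apply: (rates_main hN hgrad hL hGconvex hmu hsc hgamma hp hD hz hstar hex).
  apply: Rlt_le; apply: Rdiv_lt_0_compat; lra.
move=> i _.
rewrite /aa /bb.
exact: (part2_alg hNp (hmu i) (hk i) hs (hg' i) (hp' i)).
Qed.
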